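(* Let $(a,b)$ be a coprime pair of positive integers. Then: (1) If $A(a,b)=(m,n)$, then $W(a,b)=w(m,n)$, i.e. $W(a,b)=w(A(a,b))$. (2) $A$ is involutive: if $A(a,b)=(m,n)$ then $A(m,n)=(a,b)$. (3) $A$ is symmetric: if $A(a,b)=(m,n)$ then $A(b,a)=(n,m)$. (4) $A(a,1)=(a,1)$, and if $a$ is odd, $A(a,2)=\left(\frac{a+1}{2},\frac{a+3}{2}\right)$.
   Context: For a coprime pair $(a,b)$ of positive integers, set $(a_0,b_0)=(a,b)$, $(m_0,n_0)=(1,1)$, and inductively: if $a_i>b_i$, let $w_{i+1}=L$, $(a_{i+1},b_{i+1})=(a_i-b_i,b_i)$, $(m_{i+1},n_{i+1})=(m_i+n_i,n_i)$; if $a_i<b_i$, let $w_{i+1}=R$, $(a_{i+1},b_{i+1})=(a_i,b_i-a_i)$, $(m_{i+1},n_{i+1})=(m_i,n_i+m_i)$. The process stops at the first $N$ with $(a_N,b_N)=(1,1)$. Define the word $w(a,b)=w_1w_2\cdots w_N$ in the letters $L,R$, the pair $A(a,b)=(m_N,n_N)$, and the reversed word $W(a,b)=W_1\cdots W_N$ with $W_i=w_{N+1-i}$. *)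

(* Defs.v *)
From mathcomp Require Import all_boot.
Set Implicit Arguments. Unset Strict Implicit. Unset Printing Implicit Defensive.

Inductive letter := L | R.

(* For a coprime pair of positive integers,
   fuel a+b is more than enough (each step decreases a_i+b_i by >= 1). *)
Fixpoint walk (fuel a b m n : nat) : seq letter * (nat * nat) :=
  match fuel with
  | 0 => ([::], (m, n))
  | f.+1 =>
    if (a == 1) && (b == 1) then ([::], (m, n))
    else if b < a then
      let r := walk f (a - b) b (m + n) n in (L :: r.1, r.2)
    else if a < b then
      let r := walk f a (b - a) m (n + m) in (R :: r.1, r.2)
    else ([::], (m, n)) (* a = b <> 1: impossible for coprime pairs *)
  end.

Definition w (a b : nat) : seq letter := (walk (a + b) a b 1 1).1.
Definition A (a b : nat) : nat * nat := (walk (a + b) a b 1 1).2.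
Definition W (a b : nat) : seq letter := rev (w a b).

(* Main.v *)
Require Import Defs.
From mathcomp Require Import all_boot.
From mathcomp Require Import zify.

Definition app (c : letter) (p : nat * nat) : nat * nat :=
  match c with L => (p.1 + p.2, p.2) | R => (p.1, p.1 + p.2) end.
Definition ev (u : seq letter) := foldr app (1, 1) u.
Definition evl z (u : seq letter) := foldl (fun p c => app c p) z u.

Lemma ev_pos u : 0 < (ev u).1 /\ 0 < (ev u).2 /\ size u + 2 <= (ev u).1 + (ev u).2.
Proof.
elim: u => [|c u [h1 [h2 h3]]] /=; first by [].
rewrite /ev /= -/(ev u); case: c => /=; lia.
Qed.

Lemma walk_ev u f m n : size u < f ->
  walk f (ev u).1 (ev u).2 m n = (u, evl (m, n) u).
Proof.
elim: u f m n => [|c u IH] [|f] m n //= hf.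
have [h1 [h2 h3]] := ev_pos u.
rewrite /ev /= -/(ev u); case: c => /=.
- have -> : ((ev u).1 + (ev u).2 == 1) = false by apply/eqP; lia.
  have -> : (ev u).2 < (ev u).1 + (ev u).2 by lia.
  rewrite addnK IH //.
- have -> : ((ev u).1 == 1) && ((ev u).1 + (ev u).2 == 1) = false.
    by apply/negbTE/negP => /andP [_ /eqP]; lia.
  have -> : ((ev u).1 + (ev u).2 < (ev u).1) = false by apply/negbTE; lia.
  have -> : (ev u).1 < (ev u).1 + (ev u).2 by lia.
  rewrite addKn IH //= addnC; reflexivity.
Qed.

Lemma evl_rev u : evl (1, 1) u = ev (rev u).
Proof. by rewrite /evl /ev -[u in LHS]revK foldl_rev. Qed.

Lemma w_ev u : w (ev u).1 (ev u).2 = u.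
Proof.
have [_ [_ h]] := ev_pos u.
by rewrite /w walk_ev //; lia.
Qed.

Lemma A_ev u : A (ev u).1 (ev u).2 = ev (rev u).
Proof.
have [_ [_ h]] := ev_pos u.
by rewrite /A walk_ev /= ?evl_rev //; lia.
Qed.

Lemma ev_exists k a b : a + b <= k -> 0 < a -> 0 < b -> coprime a b ->
  exists u, ev u = (a, b).
Proof.
elim: k a b => [|k IH] a b hk ha hb hab; first lia.
case: (ltngtP a b) => h.
- have hc : coprime a (b - a).
    by rewrite /coprime -gcdnDl (subnKC (ltnW h)).
  have [u hu] := IH a (b - a) ltac:(lia) ha ltac:(lia) hc.
  exists (R :: u); rewrite /ev /= -/(ev u) hu /=; congr pair; lia.
- have hc : coprime b (a - b).
    by rewrite /coprime -gcdnDl (subnKC (ltnW h)) -/(coprime b a) coprime_sym.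
  have [u hu] := IH (a - b) b ltac:(lia) ltac:(lia) hb ltac:(by rewrite coprime_sym).
  exists (L :: u); rewrite /ev /= -/(ev u) hu /=; congr pair; lia.
- subst b. move: hab; rewrite /coprime gcdnn => /eqP ->. by exists [::].
Qed.

Definition sw c := match c with L => R | R => L end.

Lemma ev_sw z u : foldr app (z.2, z.1) (map sw u) =
  ((foldr app z u).2, (foldr app z u).1).
Proof. elim: u => [|c u IH] //=; rewrite IH; case: c => /=; congr pair; lia. Qed.

Lemma ev_nseqL z k : foldr app z (nseq k L) = (z.1 + k * z.2, z.2).
Proof. elim: k => [|k IH] /=; first by case: z => x y /=; rewrite mul0n addn0. rewrite IH /=; congr pair; lia. Qed.

Theorem lemma2p1 (a b : nat) (ha : 0 < a) (hb : 0 < b) (hab : coprime a b) :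
  (forall m n, A a b = (m, n) -> W a b = w m n) /\
  (forall m n, A a b = (m, n) -> A m n = (a, b)) /\
  (forall m n, A a b = (m, n) -> A b a = (n, m)) /\
  (A a 1 = (a, 1) /\ (odd a -> A a 2 = ((a + 1) %/ 2, (a + 3) %/ 2))).
Proof.
have [u hu] := @ev_exists (a + b) a b (leqnn _) ha hb hab.
have ha' : a = (ev u).1 by rewrite hu.
have hb' : b = (ev u).2 by rewrite hu.
split; [|split; [|split; [|split]]].
- move=> m n; rewrite /W ha' hb' A_ev w_ev => hmn.
  have hm : m = (ev (rev u)).1 by rewrite hmn.
  have hn : n = (ev (rev u)).2 by rewrite hmn.
  by rewrite hm hn w_ev.
- move=> m n; rewrite ha' hb' A_ev => hmn.
  have hm : m = (ev (rev u)).1 by rewrite hmn.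
  have hn : n = (ev (rev u)).2 by rewrite hmn.
  by rewrite hm hn A_ev revK -surjective_pairing.
- move=> m n; rewrite ha' hb' A_ev => hmn.
  have e := ev_sw (1, 1) u; rewrite /= -/(ev u) in e.
  have -> : (ev u).2 = (ev (map sw u)).1 by rewrite /ev e.
  have -> : (ev u).1 = (ev (map sw u)).2 by rewrite /ev e.
  rewrite A_ev -map_rev; have := ev_sw (1, 1) (rev u); rewrite /= -/(ev _) -/(ev (rev u)) hmn //.
- have e := ev_nseqL (1, 1) a.-1; rewrite /= -/(ev _) in e.
  have : ev (nseq a.-1 L) = (a, 1) by rewrite e; congr pair; lia.
  move=> e2.
  have -> : a = (ev (nseq a.-1 L)).1 by rewrite e2.
  have -> : 1 = (ev (nseq a.-1 L)).2 by rewrite e2.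
  by rewrite A_ev rev_nseq -surjective_pairing.
- move=> hodd.
  have ha2 : a = (a./2).*2.+1 by rewrite -[a in LHS]odd_double_half hodd.
  set k := a./2 in ha2.
  have e2 : ev (rcons (nseq k L) R) = (a, 2).
    by rewrite /ev -cats1 foldr_cat /= ev_nseqL /=; congr pair; lia.
  have := A_ev (rcons (nseq k L) R); rewrite e2 /= => ->.
  rewrite rev_rcons rev_nseq /ev /= ev_nseqL /=; congr pair.
  - rewrite ha2; lia.
  - rewrite ha2; lia.
Qed.
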